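(* There exist an environment $E$ and a total preorder $\succeq$ on $\Pi^E$ such that $\succeq\in\mathrm{Ord}_{\mathrm{LTL}}(E)$ but $\succeq\notin\mathrm{Ord}_{\mathrm{ONMR}}(E)$.
   Context: An environment is a tuple $E=(\mathcal S,\mathcal A,\mathcal T,\mathcal I)$ where $\mathcal S,\mathcal A$ are finite nonempty sets, $\mathcal T:\mathcal S\times\mathcal A\to\Delta(\mathcal S)$ and $\mathcal I\in\Delta(\mathcal S)$. A policy is a map $\pi:\mathcal S\to\Delta(\mathcal A)$ (stationary, possibly stochastic); $\Pi^E$ denotes the set of all policies. A trajectory $\xi=(s_0,a_0,s_1,a_1,\dots)\in\Xi:=\mathcal S\times(\mathcal A\times\mathcal S)^\omega$ is generated under $\pi$ by $s_0\sim\mathcal I$, $a_t\sim\pi(s_t)$, $s_{t+1}\sim\mathcal T(s_t,a_t)$; $\mathbb E^\pi_\xi$ denotes expectation under this distribution. An objective-specification formalism $X$ assigns to each environment $E$ a set of objective specifications, each inducing a total preorder $\succeq$ on $\Pi^E$; $\mathrm{Ord}_X(E)$ is the set of total preorders so induced. A specification defining a scalar $J:\Pi^E\to\mathbb R$ induces $\pi_1\succeq\pi_2\iff J(\pi_1)\ge J(\pi_2)$. ONMR: specification $(\mathcal R,f,\gamma)$ with $\mathcal R:\mathcal S\times\mathcal A\times\mathcal S\to\mathbb R$, $f:\mathbb R\to\mathbb R$, $\gamma\in[0,1)$; $J(\pi)=f\big(\mathbb E^\pi_\xi[\sum_{t=0}^\infty\gamma^t\mathcal R(s_t,a_t,s_{t+1})]\big)$.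 LTL: specification $(\varphi)$ with $\varphi$ a linear temporal logic formula whose atomic propositions are the transitions $(s,a,s')\in\mathcal S\times\mathcal A\times\mathcal S$, built with $\neg,\lor,\land,\to$ and the temporal operators $\bigcirc$ (next), $\square$ (always), $\lozenge$ (eventually), $\mathcal U$ (until). Semantics on a trajectory $\xi$ at time $t$: an atomic proposition $(s,a,s')$ holds iff $(s_t,a_t,s_{t+1})=(s,a,s')$; $\bigcirc\psi$ holds iff $\psi$ holds at $t+1$; $\square\psi$ iff $\psi$ holds at every $t'\ge t$; $\lozenge\psi$ iff $\psi$ holds at some $t'\ge t$; $\psi\,\mathcal U\,\chi$ iff there is $t'\ge t$ with $\chi$ holding at $t'$ and $\psi$ holding at every $t''$ with $t\le t''<t'$; Boolean connectives as usual. $\varphi(\xi)=1$ if $\varphi$ holds at time $0$ and $0$ otherwise; $J(\pi)=\mathbb E^\pi_\xi[\varphi(\xi)]$. *)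

(* Defs.v *)
From HB Require Import structures.
From mathcomp Require Import all_boot all_order all_algebra.
From mathcomp Require Import all_classical all_reals all_analysis.
From mathcomp Require Import Rstruct Rstruct_topology.
From Stdlib Require Rdefinitions.

Set Implicit Arguments.
Unset Strict Implicit.
Unset Printing Implicit Defensive.

Import Order.TTheory GRing.Theory Num.Theory.
Local Open Scope classical_set_scope.
Local Open Scope ring_scope.

Notation R := Rdefinitions.R.

Definition is_dist (X : finType) (p : X -> R) : Prop :=
  (forall x, 0 <= p x) /\ \sum_(x : X) p x = 1.

Record env := Env {
  St : finType;
  Ac : finType;
  St_ne : (0 < #|{: St}|)%N;
  Ac_ne : (0 < #|{: Ac}|)%N;
  Tr : St -> Ac -> St -> R;          (* Tr s a s' = T(s,a)(s') *)
  Ini : St -> R;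
  Tr_dist : forall s a, is_dist (Tr s a);
  Ini_dist : is_dist Ini }.

Definition policy (E : env) :=
  {p : St E -> Ac E -> R | forall s, is_dist (p s)}.

Definition pol_fun (E : env) (pi : policy E) : St E -> Ac E -> R := proj1_sig pi.

Definition traj (E : env) := nat -> (St E * Ac E)%type.

Fixpoint pp_tail (E : env) (pi : policy E) (prev : St E * Ac E)
    (h : seq (St E * Ac E)) : R :=
  match h with
  | [::] => 1
  | x :: h' => Tr prev.1 prev.2 x.1 * pol_fun pi x.1 x.2 * pp_tail pi x h'
  end.

Definition prefix_prob (E : env) (pi : policy E) (h : seq (St E * Ac E)) : R :=
  match h with
  | [::] => 1
  | x :: h' => Ini x.1 * pol_fun pi x.1 x.2 * pp_tail pi x h'
  end.

Definition cyl (E : env) (xi : traj E) (n : nat) : set (traj E) :=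
  [set xi' | forall t, (t < n)%N -> xi' t = xi t].

Definition cyl_prob (E : env) (pi : policy E) (xi : traj E) (n : nat) : R :=
  prefix_prob pi (mkseq xi n).

(* The trajectory distribution under pi: the (Caratheodory) outer measure
   generated by the cylinder probabilities; on measurable sets (e.g. the
   satisfaction sets of LTL formulas) this is the probability measure on
   trajectories. *)
Definition traj_outer (E : env) (pi : policy E) (X : set (traj E)) : \bar R :=
  ereal_inf [set v : \bar R | exists c : nat -> (traj E * nat)%type,
     X `<=` \bigcup_k cyl (c k).1 (c k).2 /\
     v = (\sum_(0 <= k <oo) (cyl_prob pi (c k).1 (c k).2)%:E)%E].

Definition traj_prob (E : env) (pi : policy E) (X : set (traj E)) : R :=
  fine (traj_outer pi X).

Inductive ltl (S A : Type) : Type :=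
  | LAtom of S & A & S
  | LNot of ltl S A
  | LOr of ltl S A & ltl S A
  | LAnd of ltl S A & ltl S A
  | LImp of ltl S A & ltl S A
  | LNext of ltl S A
  | LAlways of ltl S A
  | LEventually of ltl S A
  | LUntil of ltl S A & ltl S A.

Fixpoint ltl_holds (S A : Type) (xi : nat -> (S * A)%type) (t : nat)
    (phi : ltl S A) : Prop :=
  match phi with
  | LAtom s a s' => ((xi t).1, (xi t).2, (xi t.+1).1) = (s, a, s')
  | LNot p => ~ ltl_holds xi t p
  | LOr p q => ltl_holds xi t p \/ ltl_holds xi t q
  | LAnd p q => ltl_holds xi t p /\ ltl_holds xi t q
  | LImp p q => ltl_holds xi t p -> ltl_holds xi t q
  | LNext p => ltl_holds xi t.+1 p
  | LAlways p => forall t', (t <= t')%N -> ltl_holds xi t' p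
  | LEventually p => exists t', (t <= t')%N /\ ltl_holds xi t' p
  | LUntil p q => exists t', (t <= t')%N /\ ltl_holds xi t' q /\
                    forall t'', (t <= t'')%N -> (t'' < t')%N -> ltl_holds xi t'' p
  end.

Definition J_LTL (E : env) (phi : ltl (St E) (Ac E)) (pi : policy E) : R :=
  traj_prob pi [set xi | ltl_holds xi 0 phi].

(* E[R(s_t,a_t,s_{t+1})] = sum over length-(t+2) prefixes. *)
Definition exp_reward_at (E : env) (Rw : St E -> Ac E -> St E -> R)
    (pi : policy E) (t : nat) : R :=
  \sum_(h : (t.+2).-tuple (St E * Ac E))
     prefix_prob pi h *
     Rw (tnth h (inord t)).1 (tnth h (inord t)).2 (tnth h (inord t.+1)).1.

(* E[sum_t gamma^t R(s_t,a_t,s_{t+1})] (by linearity; rewards bounded). *)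
Definition disc_value (E : env) (Rw : St E -> Ac E -> St E -> R) (gamma : R)
    (pi : policy E) : R :=
  limn (series (fun t : nat => gamma ^+ t * exp_reward_at Rw pi t)).

Definition J_ONMR (E : env) (Rw : St E -> Ac E -> St E -> R) (f : R -> R)
    (gamma : R) (pi : policy E) : R :=
  f (disc_value Rw gamma pi).

Definition total_preorder (T : Type) (rel : T -> T -> Prop) : Prop :=
  (forall x, rel x x) /\ (forall x y z, rel x y -> rel y z -> rel x z) /\
  (forall x y, rel x y \/ rel y x).

Definition induced_by (T : Type) (rel : T -> T -> Prop) (J : T -> R) : Prop :=
  forall x y, rel x y <-> J y <= J x.

Definition in_Ord_LTL (E : env) (rel : policy E -> policy E -> Prop) : Prop :=
  exists phi : ltl (St E) (Ac E), induced_by rel (J_LTL phi).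

Definition in_Ord_ONMR (E : env) (rel : policy E -> policy E -> Prop) : Prop :=
  exists (Rw : St E -> Ac E -> St E -> R) (f : R -> R) (gamma : R),
    0 <= gamma < 1 /\ induced_by rel (J_ONMR Rw f gamma).

(* Main.v *)
Require Import Defs.
From mathcomp Require Import all_boot all_order all_algebra.
From mathcomp Require Import all_classical all_reals all_analysis.
From mathcomp Require Import Rstruct Rstruct_topology.
From mathcomp Require Import ring lra.
Import Order.TTheory GRing.Theory Num.Theory.
Local Open Scope classical_set_scope.
Local Open Scope ring_scope.

Lemma sum_unit (F : unit -> R) : \sum_(u : unit) F u = F tt.
Proof. by rewrite (big_pred1 tt) // => -[]. Qed.

Lemma dist1 : is_dist (fun _ : unit => (1:R)).
Proof. by split => // ; rewrite sum_unit. Qed.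

Lemma card3 : (0 < #|{: 'I_3}|)%N. Proof. by rewrite card_ord. Qed.
Lemma cardu : (0 < #|{: unit}|)%N. Proof. by rewrite card_unit. Qed.

Definition E0 : env := @Env unit 'I_3 cardu card3 (fun _ _ _ => 1) (fun _ => 1)
  (fun _ _ => dist1) dist1.

Definition pol (w : 'I_3 -> R) (H : is_dist w) : policy E0 :=
  exist (fun p : St E0 -> Ac E0 -> R => forall s, is_dist (p s)) (fun _ => w) (fun _ => H).

Lemma pp_tail_prod (w : 'I_3 -> R) (H : is_dist w) prev (h : seq (unit * 'I_3)) :
  pp_tail (@pol w H) prev h = \prod_(x <- h) w x.2.
Proof.
elim: h prev => [|x h IH] prev /=; first by rewrite big_nil.
by rewrite big_cons IH mul1r.
Qed.

Lemma prefix_prod (w : 'I_3 -> R) (H : is_dist w) (h : seq (unit * 'I_3)) :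
  prefix_prob (@pol w H) h = \prod_(x <- h) w x.2.
Proof.
case: h => [|x h] /=; first by rewrite big_nil.
by rewrite big_cons pp_tail_prod mul1r.
Qed.

Lemma tuple_sum (T : finType) n (k : 'I_n) (F G : T -> R) :
  \sum_(h : n.-tuple T) (\prod_(x <- h) F x) * G (tnth h k) =
  (\prod_(i < n | i != k) \sum_x F x) * \sum_x F x * G x.
Proof.
pose H (i : 'I_n) x := F x * (if i == k then G x else 1).
transitivity (\sum_(h : n.-tuple T) \prod_(i < n) H i (tnth h i)).
  apply: eq_bigr => h _; rewrite big_tuple big_split /=; congr (_ * _).
  by rewrite (bigD1 k) //= eqxx big1 ?mulr1 // => i /negbTE ->.
rewrite (reindex (@tuple_of_finfun T n)); last first.
  by exists finfun_of_tuple => x _; [apply: tuple_of_finfunK|apply: finfun_of_tupleK].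
transitivity (\sum_(f : {ffun 'I_n -> T}) \prod_(i < n) H i (f i)).
  apply: eq_bigr => f _; apply: eq_bigr => i _.
  by rewrite tnth_map tnth_ord_tuple.
rewrite -bigA_distr_bigA /= (bigD1 k) //= mulrC; congr (_ * _).
  by apply: eq_bigr => i /negbTE Hi; apply: eq_bigr => x _; rewrite /H Hi mulr1.
by apply: eq_bigr => x _; rewrite /H eqxx.
Qed.

Lemma sum_pair (F : 'I_3 -> R) : \sum_(x : unit * 'I_3) F x.2 = \sum_a F a.
Proof. by rewrite -(pair_bigA _ (fun _ a => F a)) /= sum_unit. Qed.

Lemma exp_val (w : 'I_3 -> R) (H : is_dist w) Rw t :
  exp_reward_at Rw (@pol w H) t = \sum_a w a * Rw tt a tt.
Proof.
have RwE : forall u a u', Rw u a u' = Rw tt a tt by case=> a; case.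
rewrite /exp_reward_at.
under eq_bigr do rewrite prefix_prod RwE.
rewrite (@tuple_sum _ _ _ (fun x => w x.2) (fun x => Rw tt x.2 tt)).
rewrite sum_pair (sum_pair (fun a => w a * Rw tt a tt)).
case: H => _ ->; by rewrite big1 ?mul1r.
Qed.

Definition o0 : 'I_3 := @Ordinal 3 0 isT.
Definition o1 : 'I_3 := @Ordinal 3 1 isT.
Definition o2 : 'I_3 := @Ordinal 3 2 isT.

Lemma sum_ind (c : R) (m : 'I_3) (F : 'I_3 -> R) :
  \sum_a (if a == m then c else 0) * F a = c * F m.
Proof. by rewrite (bigD1 m) //= eqxx big1 ?addr0 // => a /negbTE ->; rewrite mul0r. Qed.

Lemma sum_ind1 (c : R) (m : 'I_3) : \sum_a (if a == m then c else 0) = c.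
Proof.
by rewrite -[RHS](mulr1 c) -(sum_ind c m (fun _ => 1)); apply: eq_bigr => a _; rewrite mulr1.
Qed.

Definition dw (m : 'I_3) : 'I_3 -> R := fun a => if a == m then 1 else 0.
Lemma dw_dist m : is_dist (dw m).
Proof. by split; [move=> a; rewrite /dw; case: ifP|exact: sum_ind1]. Qed.

Definition mw (i j : 'I_3) (l : R) : 'I_3 -> R :=
  fun a => (if a == i then l else 0) + (if a == j then 1 - l else 0).
Lemma mw_dist i j l : 0 < l < 1 -> is_dist (mw i j l).
Proof.
move=> /andP[l0 l1]; split.
  by move=> a; rewrite /mw; case: ifP; case: ifP => _ _; lra.
by rewrite big_split /= !sum_ind1; lra.
Qed.

Lemma between (a b c : R) : (b < a /\ a < c) \/ (c < a /\ a < b) ->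
  exists l, 0 < l < 1 /\ l * b + (1 - l) * c = a.
Proof.
have key : forall a b c : R, b < a -> a < c -> exists l, 0 < l < 1 /\ l * b + (1 - l) * c = a.
  move=> {}a {}b {}c ba ac; have d0 : 0 < c - b by lra.
  exists ((c - a) / (c - b)); split.
    rewrite divr_gt0 ?subr_gt0 //=; last lra.
    rewrite ltr_pdivrMr // mul1r; lra.
  by field; lra.
case=> [[ba ac]|[ca ab]]; first exact: key.
have [l [hl e]] := key a c b ca ab; case/andP: hl => l0 l1.
by exists (1 - l); split; [apply/andP; split; lra | rewrite -e; ring].
Qed.

Lemma choose3 (r : 'I_3 -> R) : exists (m i j z : 'I_3) (l : R),
  [/\ i != j, z != i, z != j, 0 < l < 1 & l * r i + (1 - l) * r j = r m].
Proof.
have half : 0 < (1/2 : Rdefinitions.R) < 1 by apply/andP; split; lra.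
have [e01|n01] := eqVneq (r o0) (r o1).
  by exists o0, o0, o1, o2, (1/2); split => //; rewrite -e01; ring.
have [e02|n02] := eqVneq (r o0) (r o2).
  by exists o0, o0, o2, o1, (1/2); split => //; rewrite -e02; ring.
have [e12|n12] := eqVneq (r o1) (r o2).
  by exists o1, o1, o2, o0, (1/2); split => //; rewrite -e12; ring.
have key : forall m i j, i != j -> m != i -> m != j ->
    (r i < r m /\ r m < r j) \/ (r j < r m /\ r m < r i) ->
    exists (m i j z : 'I_3) (l : R),
    [/\ i != j, z != i, z != j, 0 < l < 1 & l * r i + (1 - l) * r j = r m].
  move=> m i j nij nmi nmj /between [l [hl he]].
  by exists m, i, j, m, l.
case/orP: (lt_total n01) => h01; case/orP: (lt_total n02) => h02;
  case/orP: (lt_total n12) => h12;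
  first [ apply: (key o0 o1 o2) => //; lra
        | apply: (key o1 o0 o2) => //; lra
        | apply: (key o2 o0 o1) => //; lra
        | exfalso; lra ].
Qed.

Definition cst (a : 'I_3) : traj E0 := fun _ => (tt, a).
Definition phi : ltl (St E0) (Ac E0) :=
  LOr (LAlways (LAtom tt o0 tt)) (LOr (LAlways (LAtom tt o1 tt)) (LAlways (LAtom tt o2 tt))).

Lemma phi_cst a : ltl_holds (cst a) 0 phi.
Proof.
case: a => -[|[|[|//]]] p /=.
- by left => t _; rewrite (_ : Ordinal p = o0) //; apply: val_inj.
- by right; left => t _; rewrite (_ : Ordinal p = o1) //; apply: val_inj.
- by right; right => t _; rewrite (_ : Ordinal p = o2) //; apply: val_inj.
Qed.

Lemma phi_inv (xi : traj E0) : ltl_holds xi 0 phi -> exists a, forall t, xi t = (tt, a).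
Proof.
move=> /= [H|[H|H]]; [exists o0|exists o1|exists o2] => t;
  by case: (xi t) (H t isT) => -[] b /= [->].
Qed.

Lemma prod_cst (w : 'I_3 -> R) a n : \prod_(x <- mkseq (cst a) n) w x.2 = w a ^+ n.
Proof.
rewrite /mkseq big_map.
by elim: n => [|n IH]; rewrite ?big_nil ?expr0 // -addn1 iotaD big_cat big_seq1 IH /= addn1 exprSr.
Qed.

Lemma cyl_ge0 (w : 'I_3 -> R) (H : is_dist w) xi n : 0 <= cyl_prob (@pol w H) xi n.
Proof. by rewrite /cyl_prob prefix_prod; apply: prodr_ge0 => x _; case: H. Qed.

Lemma cyl_cst (w : 'I_3 -> R) (H : is_dist w) a n :
  cyl_prob (@pol w H) (cst a) n = w a ^+ n.
Proof. by rewrite /cyl_prob prefix_prod prod_cst. Qed.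

Local Open Scope ereal_scope.

Lemma series_ge_term (u : nat -> \bar R) k : (forall n, 0 <= u n) ->
  u k <= \sum_(0 <= i <oo) u i.
Proof.
move=> u0; apply: le_trans (nneseries_lim_ge k.+1 _); last by move=> n _ _; exact: u0.
rewrite big_nat_recr //=; apply: leeDr; exact: sume_ge0.
Qed.

Lemma series_fin (u : nat -> \bar R) N : (forall n, 0 <= u n) ->
  (forall n, (N <= n)%N -> u n = 0) ->
  \sum_(0 <= i <oo) u i = \sum_(0 <= i < N) u i.
Proof.
move=> u0 uN; rewrite (nneseries_split _ N); last by move=> k _; exact: u0.
by rewrite add0n eseries0 ?adde0 // => i Hi _; exact: uN.
Qed.

Definition other (m : 'I_3) : 'I_3 := if m == o0 then o1 else o0.
Lemma other_neq m : other m != m.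
Proof. by rewrite /other; case: (eqVneq m o0) => [->|]; rewrite // eq_sym. Qed.

Lemma J_dirac m : J_LTL phi (@pol (dw m) (dw_dist m)) = 1%R.
Proof.
rewrite /J_LTL /traj_prob.
suff -> : traj_outer (@pol (dw m) (dw_dist m)) [set xi | ltl_holds xi 0 phi] = 1%:E by [].
have u0 : forall (c : nat -> (traj E0 * nat)%type) n,
    0 <= (cyl_prob (@pol (dw m) (dw_dist m)) (c n).1 (c n).2)%:E.
  by move=> c n; rewrite lee_fin; exact: cyl_ge0.
apply/eqP; rewrite eq_le; apply/andP; split.
  apply: ge_ereal_inf.
  pose c := fun k : nat => if k == 0%N then (cst m, 0%N) else (cst (other m), 1%N).
  eexists; last exact: le_refl.
  exists c; split; first by move=> xi _; exists 0%N.
  rewrite (@series_fin _ 1%N (u0 c)); first by rewrite big_nat1.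
  move=> [|n] // _; rewrite /c /= cyl_cst /dw.
  by rewrite (negbTE (other_neq m)) expr1.
apply: le_ereal_inf_tmp => v [c [cov ->]].
have [k _ Hk] := cov _ (phi_cst m).
apply: le_trans (@series_ge_term _ k (u0 c)).
rewrite lee_fin /cyl_prob.
have -> : mkseq (c k).1 (c k).2 = mkseq (cst m) (c k).2.
  by rewrite /mkseq; apply/eq_in_map => t; rewrite mem_iota => /andP[_ ht]; symmetry; exact: Hk.
by rewrite prefix_prod prod_cst /dw eqxx expr1n.
Qed.

Lemma J_mix (w : 'I_3 -> R) (H : is_dist w) (z : 'I_3) :
  (forall a, (w a < 1)%R) -> w z = 0%R -> (J_LTL phi (@pol w H) <= 1/2)%R.
Proof.
move=> w1 wz.
have u0 : forall (c : nat -> (traj E0 * nat)%type) n,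
    0 <= (cyl_prob (@pol w H) (c n).1 (c n).2)%:E.
  by move=> c n; rewrite lee_fin; exact: cyl_ge0.
have w0 : forall a, (0 <= w a)%R by move: (H) => [].

have [N _ HN] : \forall n \near \oo, forall a : 'I_3, (w a ^+ n < 1/6)%R.
  apply: filter_forall => a.
  have : (fun n : nat => (w a ^+ n : R)%R) @ \oo --> (0 : R)%R by apply: cvg_expr; rewrite ger0_norm.
  by move/cvgr_lt; apply; lra.
have HN' : forall a, (w a ^+ N.+1 <= 1/6)%R.
  by move=> a; apply/ltW/(HN N.+1) => /=.
rewrite /J_LTL /traj_prob.
set s := traj_outer _ _.
have s0 : 0 <= s.
  apply: le_ereal_inf_tmp => v [c [_ ->]].
  by apply: nneseries_ge0 => n _ _; exact: u0.
suff s_le : s <= (1/2)%:E.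
  by move: s0 s_le; case: s => [r| |] //=; rewrite lee_fin.
apply: ge_ereal_inf.
pose c := fun k : nat => (cst (if (k < 3)%N then inord k else z), N.+1).
exists (\sum_(0 <= k <oo) (cyl_prob (@pol w H) (c k).1 (c k).2)%:E).
  exists c; split => //.
  move=> xi /phi_inv [a Ha]; exists (val a) => //= t _.
  by rewrite ltn_ord inord_val Ha.
rewrite (@series_fin _ 3%N (u0 c)); last first.
  by move=> n Hn; rewrite /c /= ltnNge Hn /= cyl_cst wz exprS mul0r.
rewrite /c /= !big_nat_recr //= big_geq // add0e !cyl_cst.
rewrite -!EFinD lee_fin.
have := HN' (inord 0); have := HN' (inord 1); have := HN' (inord 2); lra.
Qed.

Local Close Scope ereal_scope.

Lemma mw_lt1 i j l : i != j -> 0 < l < 1 -> forall a, mw i j l a < 1.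
Proof.
move=> nij /andP[l0 l1] a; rewrite /mw.
case: ifPn => [/eqP ai|nai].
  by subst a; rewrite (negbTE nij); lra.
by case: ifPn => _; lra.
Qed.

Lemma mw_z i j l z : z != i -> z != j -> mw i j l z = 0.
Proof. by move=> /negbTE zi /negbTE zj; rewrite /mw zi zj addr0. Qed.

Theorem mainTheorem13 :
  exists (E : env) (rel : policy E -> policy E -> Prop),
    total_preorder rel /\ in_Ord_LTL rel /\ ~ in_Ord_ONMR rel.
Proof.
exists E0, (fun x y => J_LTL phi y <= J_LTL phi x).
split; first split => [x|]; first exact: le_refl.
  split; first by move=> x y z h1 h2; exact: le_trans h2 h1.
  by move=> x y; apply/orP; exact: le_total.
split; first by exists phi.
move=> [Rw [f [g [_ Hind]]]].
have [m [i [j [z [l [nij nzi nzj hl he]]]]]] := choose3 (fun a => Rw tt a tt).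
pose x := @pol (dw m) (dw_dist m).
pose y := @pol (mw i j l) (@mw_dist i j l hl).
have Ex : exp_reward_at Rw x = exp_reward_at Rw y.
  apply/funext => t.
  rewrite /x /y !exp_val /dw sum_ind mul1r /mw.
  under eq_bigr do rewrite mulrDl.
  by rewrite big_split /= !sum_ind.
have V : disc_value Rw g x = disc_value Rw g y by rewrite /disc_value Ex.
have := (Hind y x).2; rewrite /J_ONMR V => /(_ (le_refl _)).
rewrite J_dirac => Hle.
have := @J_mix _ (@mw_dist i j l hl) z (@mw_lt1 i j l nij hl) (@mw_z i j l z nzi nzj); lra.
Qed.
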